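(* Let $\mu$ be a valuation on $\mathrm{Spec}(R)$ and $f\in R$, $f\ge0$. If $r<r'<s'<s$ are rationals and $p<q$ are rationals, then $p<\Delta(r,s)$ or $\Delta[r',s']<q$.
   Context: $R$ is a Riesz space over $\mathbb{Q}$ with strong unit $1$; rationals identified with multiples of $1$. $\mathrm{Spec}(R)$ is the distributive lattice generated by $D(a)$, $a\in R$, subject to $D(1)=1$; $D(a)\wedge D(-a)=0$; $D(a+b)\le D(a)\vee D(b)$; $D(a)=0$ if $a\le0$; $D(a\vee b)=D(a)\vee D(b)$. A valuation is a map $\mu$ from $\mathrm{Spec}(R)$ to nonnegative lower reals (inhabited, downward closed, rounded sets of rationals; $p<x$ means $p\in x$) with $\mu(0)=0$, $\mu(1)=1$, $\mu(x)+\mu(y)=\mu(x\vee y)+\mu(x\wedge y)$, monotone, and $\mu(D(a))\le\bigvee_{\varepsilon>0}\mu(D(a-\varepsilon))$. $\Delta(r,s):=\mu(D(f-r)\wedge D(s-f))$ (lower real) and $\Delta[r,s]$ is the upper real $1-\mu(D(r-f))-\mu(D(f-s))$. *)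

(* Defs.v *)
From HB Require Import structures.
From mathcomp Require Import all_boot all_order all_algebra.
Set Implicit Arguments. Unset Strict Implicit. Unset Printing Implicit Defensive.
Import Order.TTheory GRing.Theory Num.Theory.
Local Open Scope ring_scope.

Record riesz := Riesz {
  rcar :> lmodType rat;
  rle : rcar -> rcar -> Prop;
  rjoin : rcar -> rcar -> rcar;
  rmeet : rcar -> rcar -> rcar;
  runit : rcar;
  rle_refl : forall a, rle a a;
  rle_anti : forall a b, rle a b -> rle b a -> a = b;
  rle_trans : forall a b c, rle a b -> rle b c -> rle a c;
  rle_add : forall a b c, rle a b -> rle (a + c) (b + c);
  rle_scale : forall (l : rat) a b, 0 <= l -> rle a b -> rle (l *: a) (l *: b);
  rjoin_ubl : forall a b, rle a (rjoin a b);
  rjoin_ubr : forall a b, rle b (rjoin a b);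
  rjoin_lub : forall a b c, rle a c -> rle b c -> rle (rjoin a b) c;
  rmeet_lbl : forall a b, rle (rmeet a b) a;
  rmeet_lbr : forall a b, rle (rmeet a b) b;
  rmeet_glb : forall a b c, rle c a -> rle c b -> rle c (rmeet a b);
  runit_ge0 : rle 0 runit;
  runit_strong : forall a, exists n : nat, rle a (n%:R *: runit)
}.

Definition rq (R : riesz) (r : rat) : R := r *: runit R.

(* ---------- Spec(R): presentation relations ----------
   Spec(R) is the bounded distributive lattice generated by the D(a) subject
   to the relations below.  We quantify over any bounded distributive lattice
   L with a map D satisfying the relations. *)
Definition spec_rel (R : riesz) (d : Order.disp_t) (L : tbDistrLatticeType d)
    (D : R -> L) : Prop :=
  [/\ D (runit R) = \top%O,
      forall a, (D a `&` D (- a))%O = \bot%O,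
      forall a b, (D (a + b) <= D a `|` D b)%O,
      forall a, rle a 0 -> D a = \bot%O
    & forall a b, D (rjoin a b) = (D a `|` D b)%O].

(* a lower real is a set of rationals; p < x means x p *)
Definition lreal := rat -> Prop.

Definition is_lreal (x : lreal) : Prop :=
  [/\ exists p, x p,
      forall p q, q <= p -> x p -> x q
    & forall p, x p -> exists q, p < q /\ x q].

Definition lnonneg (x : lreal) : Prop := forall p, p < 0 -> x p.

Definition lconst (c : rat) : lreal := fun p => p < c.

Definition ladd (x y : lreal) : lreal :=
  fun p => exists a b, [/\ x a, y b & p < a + b].

Definition lle (x y : lreal) : Prop := forall p, x p -> y p.

Definition leq_lr (x y : lreal) : Prop := forall p, x p <-> y p.

Definition valuation (R : riesz) (d : Order.disp_t) (L : tbDistrLatticeType d)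
    (D : R -> L) (mu : L -> lreal) : Prop :=
  (forall x, is_lreal (mu x) /\ lnonneg (mu x)) /\
  [/\ leq_lr (mu \bot%O) (lconst 0),
      leq_lr (mu \top%O) (lconst 1),
      forall x y, leq_lr (ladd (mu x) (mu y)) (ladd (mu (x `|` y)%O) (mu (x `&` y)%O)),
      forall x y, (x <= y)%O -> lle (mu x) (mu y)
    & forall a, lle (mu (D a))
        (fun p => exists eps : rat, 0 < eps /\ mu (D (a - rq R eps)) p)].

Definition Delta_lo (R : riesz) (d : Order.disp_t) (L : tbDistrLatticeType d)
    (D : R -> L) (mu : L -> lreal) (f : R) (r s : rat) : lreal :=
  mu (D (f - rq R r) `&` D (rq R s - f))%O.

(* Delta[r,s] = 1 - mu(D(r-f)) - mu(D(f-s)), an upper real;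
   Delta[r,s] < q  iff  1 - q < mu(D(r-f)) + mu(D(f-s)). *)
Definition Delta_up_lt (R : riesz) (d : Order.disp_t) (L : tbDistrLatticeType d)
    (D : R -> L) (mu : L -> lreal) (f : R) (r s : rat) (q : rat) : Prop :=
  ladd (mu (D (rq R r - f))) (mu (D (f - rq R s))) (1 - q).

(* Main.v *)
Require Import Defs.
From HB Require Import structures.
From mathcomp Require Import all_boot all_order all_algebra.
Import Order.TTheory GRing.Theory Num.Theory.
Local Open Scope ring_scope.

Section Aux.
Variables (R : riesz) (d : Order.disp_t) (L : tbDistrLatticeType d) (D : R -> L).
Hypothesis HD : spec_rel D.

Lemma D_mono (a b : R) : rle a b -> (D a <= D b)%O.
Proof.
case: HD => _ _ Hadd Hle _ Hab.
have -> : a = b + (a - b) by rewrite addrC subrK.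
apply: le_trans (Hadd _ _) _.
have -> : D (a - b) = \bot%O.
  apply: Hle. have := rle_add (- b) Hab. by rewrite subrr.
by rewrite joinx0.
Qed.

Lemma D_natscale (n : nat) (x : R) : (D ((n%:R : rat) *: x) <= D x)%O.
Proof.
case: HD => _ _ Hadd Hle _.
elim: n => [|n IH].
  by rewrite scale0r Hle ?le0x //; apply: rle_refl.
rewrite -natr1 scalerDl scale1r addrC.
by apply: le_trans (Hadd _ _) _; rewrite leUx lexx.
Qed.

Lemma D_pos {c : rat} : 0 < c -> D (rq R c) = \top%O.
Proof.
move=> c0; apply/le_anti; rewrite lex1 /=.
case: HD => H1 _ _ _ _; rewrite -H1.
set n := `|denq c|%N.
apply: le_trans (D_natscale n (rq R c)).
apply: D_mono.
have hn : (n%:R : rat) * c = (numq c)%:~R.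
  rewrite /n natr_absz gtr0_norm ?denq_gt0 // numqE mulrC //.
have hge : 0 <= (n%:R : rat) * c - 1.
  rewrite subr_ge0 hn ler1z. have : (0 < numq c)%R by rewrite numq_gt0. by [].
have := rle_add (runit R) (rle_scale hge (runit_ge0 R)).
by rewrite scaler0 add0r scalerBl scale1r subrK /rq scalerA.
Qed.

Lemma D_cover (a b : R) (c : rat) : 0 < c -> a + b = rq R c ->
  (D a `|` D b)%O = \top%O.
Proof.
move=> c0 hab; apply/le_anti; rewrite lex1 /=.
case: HD => _ _ Hadd _ _.
by rewrite -(D_pos c0) -hab Hadd.
Qed.
End Aux.

Lemma ladd_of_join (mu : rat -> Prop) (nu : rat -> Prop) t :
  is_lreal mu -> lnonneg nu -> mu t -> ladd mu nu t.
Proof.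
case=> _ _ Hr Hn ht.
have [a [ta ha]] := Hr t ht.
exists a, ((t - a) / 2%:R); split => //.
  apply: Hn. by rewrite pmulr_llt0 // subr_lt0.
set x := t - a.
have x0 : x < 0 by rewrite /x subr_lt0.
rewrite -[t in t < _](@subrK _ a) -/x addrC ltrD2l ltr_pdivlMr // mulr_natr mulr2n.
by rewrite gtrDr.
Qed.

Theorem lemma4p11 (R : riesz) (d : Order.disp_t) (L : tbDistrLatticeType d)
    (D : R -> L) (mu : L -> lreal)
    (HD : spec_rel D) (Hmu : valuation D mu)
    (f : R) (hf : rle 0 f)
    (r r' s' s p q : rat)
    (hrr' : r < r') (hr's' : r' < s') (hs's : s' < s) (hpq : p < q) :
  Delta_lo D mu f r s p \/ Delta_up_lt D mu f r' s' q.
Proof.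
case: Hmu => Hlr [H0 H1 Hmod Hmono Hcont].
rewrite /Delta_lo /Delta_up_lt.
set P := D (f - rq R r); set Q := D (rq R s - f).
set B1 := D (rq R r' - f); set B2 := D (f - rq R s').
have hPB1 : (P `|` B1)%O = \top%O.
  apply: (@D_cover R d L D HD _ _ (r' - r)); first by rewrite subr_gt0.
  by rewrite addrC addrA subrK /rq scalerBl.
have hQB2 : (Q `|` B2)%O = \top%O.
  apply: (@D_cover R d L D HD _ _ (s - s')); first by rewrite subr_gt0.
  by rewrite addrA subrK /rq scalerBl.
have Htop : ((P `&` Q) `|` (B1 `|` B2))%O = \top%O.
  apply/le_anti; rewrite lex1 /= joinIl lexI; apply/andP; split.
    rewrite -hPB1 leUx leUl /=; apply: (le_trans (leUl B1 B2)); exact: leUr.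
  rewrite -hQB2 leUx leUl /=; apply: (le_trans (leUr B2 B1)); exact: leUr.
have ht1 : mu \top%O (1 - q + p).
  apply/(H1 _); rewrite /lconst -addrA -[X in _ < X]addr0 ltrD2l addrC subr_lt0 //.
rewrite -Htop in ht1.
have := @ladd_of_join _ _ _ (proj1 (Hlr _)) (proj2 (Hlr ((P `&` Q) `&` (B1 `|` B2))%O)) ht1.
move/(Hmod (P `&` Q)%O (B1 `|` B2)%O)=> [a [c [ha hc ht]]].
case: (lerP p a) => hap.
  left; case: (proj1 (Hlr (P `&` Q)%O)) => _ Hdown _; exact: Hdown a p hap ha.
right.
have hc' : 1 - q < c.
  have : 1 - q + p < p + c by apply: lt_trans ht _; rewrite ltrD2r.
  by rewrite [p + c]addrC ltrD2r.
apply/(Hmod B1 B2); apply: @ladd_of_join _ _ _ (proj1 (Hlr _)) (proj2 (Hlr _)) _.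
case: (proj1 (Hlr (B1 `|` B2)%O)) => _ Hdown _; exact: Hdown c (1 - q) (ltW hc') hc.
Qed.
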